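(* Let $(P,\mathcal C,\varepsilon)$ be a chained projection category. Define $\mathbf S(P,\mathcal C,\varepsilon)=(S,\star,D,R)$ by $S=\mathcal C$, $D(a)=\mathbf d(a)$, $R(a)=\mathbf r(a)$, and for $a,b\in\mathcal C$, with $p=\mathbf r(a)$, $q=\mathbf d(b)$, $p'=q\delta_p$, $q'=p\theta_q$, $$a\star b=a\rfloor_{p'}\circ\varepsilon[p',q']\circ{}_{q'}\lfloor b.$$ Then $\mathbf S(P,\mathcal C,\varepsilon)$ is a DRC-semigroup.
   Context: (The product is well defined since $p'\le p$, $q'\le q$ and $p'\,\mathscr F\,q'$.) \textbf{DRC-semigroups.} A DRC-semigroup is an algebra $(S,\cdot,D,R)$ with $(S,\cdot)$ a semigroup and unary $D,R$ satisfying, for all $a,b$: $D(a)a=a$, $aR(a)=a$; $D(ab)=D(aD(b))$, $R(ab)=R(R(a)b)$; $D(ab)=D(a)D(ab)D(a)$, $R(ab)=R(b)R(ab)R(b)$; $R(D(a))=D(a)$, $D(R(a))=R(a)$. \textbf{Projection algebras.} Maps are written on the right and composed left to right. A projection algebra is a set $P$ with maps $\theta_p,\delta_p:P\to P$ ($p\in P$) such that for all $p,q$: $p\theta_p=p$, $p\delta_p=p$; $p\theta_{q\theta_p}=q\theta_p$, $p\delta_{q\delta_p}=q\delta_p$; $\theta_q\theta_{q\theta_p}=\theta_q\theta_p$, $\delta_q\delta_{q\delta_p}=\delta_q\delta_p$; $\theta_p\delta_p=\theta_p$, $\delta_p\theta_p=\delta_p$; $\theta_{p\delta_q}\theta_p=\theta_q\theta_p$,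 $\delta_{p\theta_q}\delta_p=\delta_q\delta_p$. Order: $p\le q\iff p=p\theta_q$. Relation: $p\,\mathscr F\,q\iff p=q\delta_p$ and $q=p\theta_q$. \textbf{Biordered categories.} A small category is identified with its morphisms, objects with identities ($v\mathcal C$); $\mathbf d,\mathbf r$ are domain/codomain and $a\circ b$ is defined iff $\mathbf r(a)=\mathbf d(b)$. A left-ordered category is $(\mathcal C,\le)$, $\le$ a partial order with: $a\le b\Rightarrow\mathbf d(a)\le\mathbf d(b),\mathbf r(a)\le\mathbf r(b)$; $a\le b$, $c\le c'$ with $a\circ c$, $b\circ c'$ defined $\Rightarrow a\circ c\le b\circ c'$; for each object $p\le\mathbf d(a)$ a unique $u\le a$ with $\mathbf d(u)=p$ (denoted ${}_p\lfloor a$). Right-ordered: dually, a unique $v\le a$ with $\mathbf r(v)=q$ for each object $q\le\mathbf r(a)$ (denoted $a\rfloor_q$). A biordered category $(\mathcal C,\le_l,\le_r)$ is left-ordered under $\le_l$, right-ordered under $\le_r$, with $\le_l,\le_r$ equal on $v\mathcal C$. Biordered morphisms are functors preserving both orders. $t^\downarrow=\{s:s\le t\}$; $\mathcal C(q,r)=\{a:\mathbf d(a)=q,\mathbf r(a)=r\}$. \textbf{Projection categories.} A weak projection category $(P,\mathcal C)$: $\mathcal C$ biordered, $P=v\mathcal C$ a projection algebra whose order equals the restriction of $\le_l$ and of $\le_r$. For $a\in\mathcal C$: $p\vartheta_a=\mathbf r({}_p\lfloor a)$ for $p\le\mathbf d(a)$; $q\vartheta'_a=\mathbf d(a\rfloor_q)$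 for $q\le\mathbf r(a)$; $\Theta_a=\theta_{\mathbf d(a)}\vartheta_a$, $\Delta_a=\delta_{\mathbf r(a)}\vartheta'_a$ (maps $P\to P$). A projection category also satisfies (C1): $\Theta_{a\rfloor_q}=\Theta_a\theta_q$, $\Delta_{{}_p\lfloor a}=\Delta_a\delta_p$ for $p\le\mathbf d(a)$, $q\le\mathbf r(a)$. \textbf{Chain category.} Paths: tuples $(p_1,\dots,p_k)$ with $p_1\mathscr F\cdots\mathscr F p_k$, $\mathbf d=p_1$, $\mathbf r=p_k$, composition $(p_1,\dots,p_k)\circ(p_k,\dots,p_l)=(p_1,\dots,p_l)$; restrictions ${}_q\lfloor(p_1,\dots,p_k)=(q_1,\dots,q_k)$, $q_1=q\le p_1$, $q_i=q_{i-1}\theta_{p_i}$; $(p_1,\dots,p_k)\rfloor_r=(r_1,\dots,r_k)$, $r_k=r\le p_k$, $r_i=r_{i+1}\delta_{p_i}$. The chain category $\mathcal C(P)$ is the quotient of this (biordered) path category by the congruence generated by $(p,p)\approx(p)$, with elements $[p_1,\dots,p_k]$, objects $P$, and restrictions computed on representatives. \textbf{Chained projection categories.} An evaluation map is a biordered functor $\varepsilon:\mathcal C(P)\to\mathcal C$ with $\varepsilon[p]=p$. For $b\in\mathcal C(q,r)$, $p,s\in P$, let $e=s\Delta_b\delta_p$, $e_1=s\Delta_b\delta_{p\theta_q}$, $e_2=p\theta_{s\Delta_b}$, $f=p\Theta_b\theta_s$, $f_1=s\delta_{p\Theta_b}$, $f_2=p\Theta_b\theta_{s\delta_r}$ (the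 following are then defined), $\lambda(p,b,s)=\varepsilon[e,e_1]\circ({}_{p\theta_q}\lfloor b)\rfloor_{f_1}\circ\varepsilon[f_1,f]$, $\rho(p,b,s)=\varepsilon[e,e_2]\circ{}_{e_2}\lfloor(b\rfloor_{s\delta_r})\circ\varepsilon[f_2,f]$. A chained projection category is a triple $(P,\mathcal C,\varepsilon)$ with $(P,\mathcal C)$ a projection category, $\varepsilon$ an evaluation map, and (C2) $\lambda(p,b,s)=\rho(p,b,s)$ for all $b\in\mathcal C$, $p,s\in P$. *)

(* Defs.v *)
(* Conventions:
   - A small category is identified with its type of morphisms C; objects are
     the identities, i.e. the a with  d a = a.  Composition [comp a b] is a
     total function, meaningful only when  r a = d b.
   - Maps on P are written on the right in the paper; here
       th p x  stands for  x theta_p,   del p x  stands for  x delta_p.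
     They are functions C -> C but only their values on objects matter.
   - lres p a  = {}_p|_ a  (left restriction),  rres a q = a _|_q (right). *)
From Stdlib Require Import List.
Import ListNotations.

Set Implicit Arguments.

Record cpc_data (C : Type) := CPC {
  dom  : C -> C;
  cod  : C -> C;
  comp : C -> C -> C;
  lel  : C -> C -> Prop;
  ler  : C -> C -> Prop;
  lres : C -> C -> C;
  rres : C -> C -> C;
  th   : C -> C -> C;
  del  : C -> C -> C;
  eps  : list C -> C
}.

Section Defs.
Variable C : Type.
Variable X : cpc_data C.

Local Notation d := (dom X).
Local Notation r := (cod X).
Local Notation comp := (comp X).
Local Notation lel := (lel X).
Local Notation ler := (ler X).
Local Notation lres := (lres X).
Local Notation rres := (rres X).
Local Notation th := (th X).
Local Notation del := (del X).
Local Notation eps := (eps X).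

Definition ob (a : C) : Prop := d a = a.

Definition is_category : Prop :=
  (forall a, d (d a) = d a /\ r (d a) = d a /\ d (r a) = r a /\ r (r a) = r a) /\
  (forall a b, r a = d b -> d (comp a b) = d a /\ r (comp a b) = r b) /\
  (forall a, comp (d a) a = a /\ comp a (r a) = a) /\
  (forall a b c, r a = d b -> r b = d c -> comp (comp a b) c = comp a (comp b c)).

Definition is_partial_order (le : C -> C -> Prop) : Prop :=
  (forall a, le a a) /\
  (forall a b, le a b -> le b a -> a = b) /\
  (forall a b c, le a b -> le b c -> le a c).

Definition is_left_ordered : Prop :=
  is_partial_order lel /\
  (forall a b, lel a b -> lel (d a) (d b) /\ lel (r a) (r b)) /\
  (forall a b c c', lel a b -> lel c c' -> r a = d c -> r b = d c' ->
     lel (comp a c) (comp b c')) /\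
  (* existence and uniqueness of u <= a with d u = p, for objects p <= d a *)
  (forall a p, ob p -> lel p (d a) -> lel (lres p a) a /\ d (lres p a) = p) /\
  (forall a u, lel u a -> u = lres (d u) a).

Definition is_right_ordered : Prop :=
  is_partial_order ler /\
  (forall a b, ler a b -> ler (d a) (d b) /\ ler (r a) (r b)) /\
  (forall a b c c', ler a b -> ler c c' -> r a = d c -> r b = d c' ->
     ler (comp a c) (comp b c')) /\
  (forall a q, ob q -> ler q (r a) -> ler (rres a q) a /\ r (rres a q) = q) /\
  (forall a v, ler v a -> v = rres a (r v)).

Definition is_biordered_category : Prop :=
  is_category /\ is_left_ordered /\ is_right_ordered /\
  (forall p q, ob p -> ob q -> (lel p q <-> ler p q)).

Definition is_projection_algebra : Prop :=
  (forall p x, ob p -> ob x -> ob (th p x) /\ ob (del p x)) /\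
  (forall p, ob p -> th p p = p /\ del p p = p) /\
  (forall p q, ob p -> ob q ->
     th (th p q) p = th p q /\ del (del p q) p = del p q) /\
  (forall p q x, ob p -> ob q -> ob x ->
     th (th p q) (th q x) = th p (th q x) /\
     del (del p q) (del q x) = del p (del q x) /\
     del p (th p x) = th p x /\
     th p (del p x) = del p x /\
     th p (th (del q p) x) = th p (th q x) /\
     del p (del (th q p) x) = del p (del q x)).

Definition pa_le (p q : C) : Prop := p = th q p.
Definition Frel (p q : C) : Prop := p = del p q /\ q = th q p.

Definition is_weak_projection_category : Prop :=
  is_biordered_category /\ is_projection_algebra /\
  (forall p q, ob p -> ob q -> (pa_le p q <-> lel p q) /\ (pa_le p q <-> ler p q)).

(* Theta_a = theta_{d a} vartheta_a ,  Delta_a = delta_{r a} vartheta'_a *)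
Definition Theta (a x : C) : C := r (lres (th (d a) x) a).
Definition Delta (a x : C) : C := d (rres a (del (r a) x)).

Definition is_projection_category : Prop :=
  is_weak_projection_category /\
  (forall a q x, ob q -> lel q (r a) -> ob x ->
     Theta (rres a q) x = th q (Theta a x)) /\
  (forall a p x, ob p -> lel p (d a) -> ob x ->
     Delta (lres p a) x = del p (Delta a x)).

Fixpoint fchain (l : list C) : Prop :=
  match l with
  | [] => True
  | [p] => ob p
  | p :: ((q :: _) as t) => ob p /\ Frel p q /\ fchain t
  end.

Fixpoint chain (f : C -> C -> C) (x : C) (l : list C) : list C :=
  match l with
  | [] => [x]
  | p :: rest => x :: chain f (f p x) rest
  end.

(* _q|_(p1,...,pk) = (q1,...,qk), q1 = q, q_i = q_{i-1} theta_{p_i} *)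
Definition path_lres (q : C) (ps : list C) : list C := chain th q (tl ps).
(* (p1,...,pk)_|_r = (r1,...,rk), rk = r, r_i = r_{i+1} delta_{p_i} *)
Definition path_rres (ps : list C) (s : C) : list C :=
  rev (chain del s (tl (rev ps))).

(* eps induces a biordered functor C(P) -> C with eps[p] = p.
   Functors out of the quotient C(P) are exactly functors on the path category
   that are constant on classes of the congruence generated by (p,p) ~ (p). *)
Definition is_evaluation_map : Prop :=
  (forall p, ob p -> eps [p] = p) /\
  (forall l1 p l2, fchain (l1 ++ p :: l2) ->
     eps (l1 ++ p :: p :: l2) = eps (l1 ++ p :: l2)) /\
  (forall p l, fchain (p :: l) ->
     d (eps (p :: l)) = p /\ r (eps (p :: l)) = last l p) /\
  (forall p l1 l2, fchain (p :: l1) -> fchain (last l1 p :: l2) ->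
     eps (p :: l1 ++ l2) = comp (eps (p :: l1)) (eps (last l1 p :: l2))) /\
  (forall p l q, fchain (p :: l) -> ob q -> lel q p ->
     lel (eps (path_lres q (p :: l))) (eps (p :: l))) /\
  (forall p l s, fchain (p :: l) -> ob s -> lel s (last l p) ->
     ler (eps (path_rres (p :: l) s)) (eps (p :: l))).

Definition lambda_ (p b s : C) : C :=
  let q := d b in
  let e := del p (Delta b s) in
  let e1 := del (th q p) (Delta b s) in
  let f := th s (Theta b p) in
  let f1 := del (Theta b p) s in
  comp (comp (eps [e; e1]) (rres (lres (th q p) b) f1)) (eps [f1; f]).

Definition rho_ (p b s : C) : C :=
  let rb := r b in
  let e := del p (Delta b s) in
  let e2 := th (Delta b s) p in
  let f := th s (Theta b p) in
  let f2 := th (del rb s) (Theta b p) in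
  comp (comp (eps [e; e2]) (lres e2 (rres b (del rb s)))) (eps [f2; f]).

Definition is_chained_projection_category : Prop :=
  is_projection_category /\ is_evaluation_map /\
  (forall b p s, ob p -> ob s -> lambda_ p b s = rho_ p b s).

Definition star (a b : C) : C :=
  let p := r a in
  let q := d b in
  let p' := del p q in
  let q' := th q p in
  comp (comp (rres a p') (eps [p'; q'])) (lres q' b).

End Defs.

Definition is_DRC_semigroup (S : Type) (mul : S -> S -> S) (D R : S -> S) : Prop :=
  (forall a b c, mul (mul a b) c = mul a (mul b c)) /\
  (forall a, mul (D a) a = a /\ mul a (R a) = a) /\
  (forall a b, D (mul a b) = D (mul a (D b)) /\ R (mul a b) = R (mul (R a) b)) /\
  (forall a b, D (mul a b) = mul (mul (D a) (D (mul a b))) (D a) /\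
               R (mul a b) = mul (mul (R b) (R (mul a b))) (R b)) /\
  (forall a, R (D a) = D a /\ D (R a) = R a).

(* Main.v *)
Require Import Defs.
From Stdlib Require List.
Import List.ListNotations.
Open Scope list_scope.

Section S.
Variable C : Type.
Variable X : cpc_data C.
Hypothesis HX : is_chained_projection_category X.

Local Notation d := (dom X).
Local Notation r := (cod X).
Local Notation comp := (comp X).
Local Notation lel := (lel X).
Local Notation ler := (ler X).
Local Notation lres := (lres X).
Local Notation rres := (rres X).
Local Notation th := (th X).
Local Notation del := (del X).
Local Notation eps := (eps X).
Local Notation ob := (ob X).
Local Notation le := (pa_le X).

Ltac unpack :=
  destruct HX as [[[[[Hc1 [Hc2 [Hc3 Hc4]]]
     [[[Hl_refl [Hl_anti Hl_trans]] [Hl_mono [Hl_comp [Hl_res Hl_uniq]]]]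
      [[[Hr_refl [Hr_anti Hr_trans]] [Hr_mono [Hr_comp [Hr_res Hr_uniq]]]] Hagree]]]
     [[Hpa0 [Hpa1 [Hpa2 Hpa3]]] Hord]] [HC1a HC1b]] [[He1 [He2 [He3 [He4 [He5 He6]]]]] Hlr]].

Lemma cat_dr a : d (d a) = d a /\ r (d a) = d a /\ d (r a) = r a /\ r (r a) = r a.
Proof. unpack. apply Hc1. Qed.
Lemma comp_dr a b : r a = d b -> d (comp a b) = d a /\ r (comp a b) = r b.
Proof. unpack. apply Hc2. Qed.
Lemma comp_id a : comp (d a) a = a /\ comp a (r a) = a.
Proof. unpack. apply Hc3. Qed.
Lemma comp_assoc a b c : r a = d b -> r b = d c -> comp (comp a b) c = comp a (comp b c).
Proof. unpack. apply Hc4. Qed.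

Lemma ob_d a : ob (d a). Proof. apply cat_dr. Qed.
Lemma ob_r a : ob (r a). Proof. apply cat_dr. Qed.
Lemma ob_r_eq p : ob p -> r p = p.
Proof. intro H. unfold Defs.ob in H. rewrite <- H. apply cat_dr. Qed.

Lemma lel_refl a : lel a a. Proof. unpack. apply Hl_refl. Qed.
Lemma ler_refl a : ler a a. Proof. unpack. apply Hr_refl. Qed.
Lemma lel_trans a b c : lel a b -> lel b c -> lel a c. Proof. unpack. apply Hl_trans. Qed.
Lemma ler_trans a b c : ler a b -> ler b c -> ler a c. Proof. unpack. apply Hr_trans. Qed.
Lemma lel_mono a b : lel a b -> lel (d a) (d b) /\ lel (r a) (r b). Proof. unpack. apply Hl_mono. Qed.
Lemma ler_mono a b : ler a b -> ler (d a) (d b) /\ ler (r a) (r b). Proof. unpack. apply Hr_mono. Qed.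
Lemma lel_comp a b c c' : lel a b -> lel c c' -> r a = d c -> r b = d c' -> lel (comp a c) (comp b c').
Proof. unpack. apply Hl_comp. Qed.
Lemma ler_comp a b c c' : ler a b -> ler c c' -> r a = d c -> r b = d c' -> ler (comp a c) (comp b c').
Proof. unpack. apply Hr_comp. Qed.
Lemma lres_spec a p : ob p -> lel p (d a) -> lel (lres p a) a /\ d (lres p a) = p.
Proof. unpack. apply Hl_res. Qed.
Lemma lres_uniq a u : lel u a -> u = lres (d u) a.
Proof. unpack. apply Hl_uniq. Qed.
Lemma rres_spec a q : ob q -> ler q (r a) -> ler (rres a q) a /\ r (rres a q) = q.
Proof. unpack. apply Hr_res. Qed.
Lemma rres_uniq a v : ler v a -> v = rres a (r v).
Proof. unpack. apply Hr_uniq. Qed.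

Lemma le_lel p q : ob p -> ob q -> le p q -> lel p q.
Proof. unpack. intros. destruct (Hord p q) as [[? ?] [? ?]]; auto. Qed.
Lemma lel_le p q : ob p -> ob q -> lel p q -> le p q.
Proof. unpack. intros. destruct (Hord p q) as [[? ?] [? ?]]; auto. Qed.
Lemma le_ler p q : ob p -> ob q -> le p q -> ler p q.
Proof. unpack. intros. destruct (Hord p q) as [[? ?] [? ?]]; auto. Qed.
Lemma ler_le p q : ob p -> ob q -> ler p q -> le p q.
Proof. unpack. intros. destruct (Hord p q) as [[? ?] [? ?]]; auto. Qed.

Lemma th_ob p x : ob p -> ob x -> ob (th p x). Proof. unpack. intros; apply Hpa0; auto. Qed.
Lemma del_ob p x : ob p -> ob x -> ob (del p x). Proof. unpack. intros; apply Hpa0; auto. Qed.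
Lemma A1t p : ob p -> th p p = p. Proof. unpack. intros; apply Hpa1; auto. Qed.
Lemma A1d p : ob p -> del p p = p. Proof. unpack. intros; apply Hpa1; auto. Qed.
Lemma A2t p q : ob p -> ob q -> th (th p q) p = th p q. Proof. unpack. intros; apply Hpa2; auto. Qed.
Lemma A2d p q : ob p -> ob q -> del (del p q) p = del p q. Proof. unpack. intros; apply Hpa2; auto. Qed.
Lemma A3t p q x : ob p -> ob q -> ob x -> th (th p q) (th q x) = th p (th q x).
Proof. unpack. intros; apply Hpa3; auto. Qed.
Lemma A3d p q x : ob p -> ob q -> ob x -> del (del p q) (del q x) = del p (del q x).
Proof. unpack. intros; apply Hpa3; auto. Qed.
Lemma A4a p x : ob p -> ob x -> del p (th p x) = th p x.
Proof. unpack. intros. apply (Hpa3 p p x); auto. Qed.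
Lemma A4b p x : ob p -> ob x -> th p (del p x) = del p x.
Proof. unpack. intros. apply (Hpa3 p p x); auto. Qed.
Lemma A5t p q x : ob p -> ob q -> ob x -> th p (th (del q p) x) = th p (th q x).
Proof. unpack. intros; apply Hpa3; auto. Qed.
Lemma A5d p q x : ob p -> ob q -> ob x -> del p (del (th q p) x) = del p (del q x).
Proof. unpack. intros; apply Hpa3; auto. Qed.

Lemma C1a a q x : ob q -> lel q (r a) -> ob x -> Theta X (rres a q) x = th q (Theta X a x).
Proof. unpack. apply HC1a. Qed.
Lemma C1b a p x : ob p -> lel p (d a) -> ob x -> Delta X (lres p a) x = del p (Delta X a x).
Proof. unpack. apply HC1b. Qed.

Lemma E1 p : ob p -> eps [p] = p. Proof. unpack. apply He1. Qed.
Lemma E2 l1 p l2 : fchain X (l1 ++ p :: l2) -> eps (l1 ++ p :: p :: l2) = eps (l1 ++ p :: l2).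
Proof. unpack. apply He2. Qed.
Lemma E3 p l : fchain X (p :: l) -> d (eps (p :: l)) = p /\ r (eps (p :: l)) = List.last l p.
Proof. unpack. apply He3. Qed.
Lemma E5 p l q : fchain X (p :: l) -> ob q -> lel q p -> lel (eps (path_lres X q (p :: l))) (eps (p :: l)).
Proof. unpack. apply He5. Qed.
Lemma E6 p l s : fchain X (p :: l) -> ob s -> lel s (List.last l p) -> ler (eps (path_rres X (p :: l) s)) (eps (p :: l)).
Proof. unpack. apply He6. Qed.
Lemma LR b p s : ob p -> ob s -> lambda_ X p b s = rho_ X p b s.
Proof. unpack. apply Hlr. Qed.


Ltac obs := repeat first [ apply th_ob | apply del_ob | apply ob_d | apply ob_r | assumption ].

Lemma T_idem p x : ob p -> ob x -> th p (th p x) = th p x.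
Proof.
  intros Hp Hx. rewrite <- (A4a p x) at 1 by auto.
  rewrite A4b by obs. apply A4a; auto.
Qed.
Lemma D_idem p x : ob p -> ob x -> del p (del p x) = del p x.
Proof.
  intros Hp Hx. rewrite <- (A4b p x) at 1 by auto.
  rewrite A4a by obs. apply A4b; auto.
Qed.
Lemma T_le p x : ob p -> ob x -> le (th p x) p.
Proof. intros. unfold pa_le. symmetry. apply T_idem; auto. Qed.
Lemma D_le p x : ob p -> ob x -> le (del p x) p.
Proof. intros. unfold pa_le. symmetry. apply A4b; auto. Qed.
Lemma le_D p q : ob p -> ob q -> le p q -> del q p = p.
Proof. unfold pa_le. intros Hp Hq H. rewrite H at 1. rewrite A4a by auto. auto. Qed.
Lemma le_Tp p q : ob p -> ob q -> le p q -> th p q = p.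
Proof. unfold pa_le. intros Hp Hq H. rewrite H at 1. rewrite A2t by auto. auto. Qed.
Lemma le_Dp p q : ob p -> ob q -> le p q -> del p q = p.
Proof. intros Hp Hq H. pose proof (le_D p q Hp Hq H) as E. rewrite <- E at 1.
  rewrite A2d by auto. auto. Qed.
Lemma le_refl p : ob p -> le p p.
Proof. intros. unfold pa_le. rewrite A1t; auto. Qed.

Lemma L5a p q : ob p -> ob q -> th q (del p q) = th q p.
Proof.
  intros Hp Hq.
  rewrite <- (A1t p) at 2 by auto.
  rewrite <- (A5t q p p) by auto.
  rewrite (le_Tp (del p q) p) by (auto; obs; apply D_le; auto). auto.
Qed.
Lemma L5b p q : ob p -> ob q -> del p (th q p) = del p q.
Proof.
  intros Hp Hq.
  rewrite <- (A1d q) at 2 by auto.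
  rewrite <- (A5d p q q) by auto.
  rewrite (le_Dp (th q p) q) by (auto; obs; apply T_le; auto). auto.
Qed.
Lemma Frel_DT p q : ob p -> ob q -> Frel X (del p q) (th q p).
Proof.
  intros Hp Hq. split.
  -
    rewrite <- (A4a q p) by auto.
    rewrite A3d by obs. rewrite (A4a q p) by auto. rewrite L5b by auto. auto.
  - rewrite <- (A4b p q) by auto.
    rewrite A3t by obs. rewrite (A4b p q) by auto. rewrite L5a by auto. auto.
Qed.

Lemma Frel_restr_l p p' q : ob p -> ob p' -> ob q -> Frel X p p' -> le q p -> Frel X q (th p' q).
Proof.
  intros Hp Hp' Hq [F1 F2] Hle.
  assert (Dq : del q p' = q).
  { pose proof (A5d q p p' Hq Hp Hp') as E.
    rewrite <- Hle in E. rewrite D_idem in E by auto. rewrite E, <- F1.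
    apply le_Dp; auto. }
  pose proof (Frel_DT q p' Hq Hp') as [G1 G2]. rewrite Dq in G1, G2.
  split; auto.
Qed.
Lemma Frel_restr_r p p' s : ob p -> ob p' -> ob s -> Frel X p p' -> le s p' -> Frel X (del p s) s.
Proof.
  intros Hp Hp' Hs [F1 F2] Hle.
  assert (Ts : th s p = s).
  { pose proof (A5t s p' p Hs Hp' Hp) as E.
    rewrite (le_D s p') in E by auto. rewrite T_idem in E by auto. rewrite E, <- F2.
    apply le_Tp; auto. }
  pose proof (Frel_DT p s Hp Hs) as [G1 G2]. rewrite Ts in G1, G2.
  split; auto.
Qed.

Lemma I1 p q w : ob p -> ob q -> ob w -> le w q -> del (del p q) (del (th q p) w) = del p w.
Proof.
  intros Hp Hq Hw Hle.
  rewrite <- (L5a p q) by auto.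
  rewrite A5d by obs.
  rewrite A3d by auto. rewrite (le_D w q) by auto. auto.
Qed.
Lemma I2 s r0 t : ob s -> ob r0 -> ob t -> le t r0 -> th (th s r0) (th (del r0 s) t) = th s t.
Proof.
  intros Hs Hr Ht Hle.
  rewrite <- (L5b r0 s) by auto.
  rewrite A5t by obs.
  rewrite A3t by auto. rewrite <- Hle. auto.
Qed.


Lemma lres_d a p : ob p -> lel p (d a) -> d (lres p a) = p.
Proof. intros. apply lres_spec; auto. Qed.
Lemma rres_r a q : ob q -> ler q (r a) -> r (rres a q) = q.
Proof. intros. apply rres_spec; auto. Qed.
Lemma lres_self a : lres (d a) a = a.
Proof. symmetry. apply lres_uniq, lel_refl. Qed.
Lemma rres_self a : rres a (r a) = a.
Proof. symmetry. apply rres_uniq, ler_refl. Qed.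
Lemma lres_obj p q : ob p -> ob q -> le q p -> lres q p = q.
Proof. intros Hp Hq H. rewrite (lres_uniq p q) at 2 by (apply le_lel; auto).
  unfold Defs.ob in Hq. rewrite Hq. auto. Qed.
Lemma rres_obj p q : ob p -> ob q -> le q p -> rres p q = q.
Proof. intros Hp Hq H. rewrite (rres_uniq p q) at 2 by (apply le_ler; auto).
  rewrite ob_r_eq by auto. auto. Qed.
Lemma lres_r_le a p : ob p -> lel p (d a) -> le (r (lres p a)) (r a).
Proof. intros. apply lel_le; try apply ob_r. apply lel_mono. apply lres_spec; auto. Qed.
Lemma rres_d_le a q : ob q -> ler q (r a) -> le (d (rres a q)) (d a).
Proof. intros. apply ler_le; try apply ob_d. apply ler_mono. apply rres_spec; auto. Qed.
Lemma lres_lres a p q : ob p -> ob q -> lel p (d a) -> lel q p -> lres q (lres p a) = lres q a.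
Proof.
  intros Hp Hq H1 H2.
  destruct (lres_spec a p Hp H1) as [L1 L2].
  assert (H3 : lel q (d (lres p a))) by (rewrite L2; auto).
  destruct (lres_spec _ q Hq H3) as [M1 M2].
  rewrite (lres_uniq a (lres q (lres p a))) by (eapply lel_trans; eauto).
  rewrite M2. auto.
Qed.
Lemma rres_rres a p q : ob p -> ob q -> ler p (r a) -> ler q p -> rres (rres a p) q = rres a q.
Proof.
  intros Hp Hq H1 H2.
  destruct (rres_spec a p Hp H1) as [L1 L2].
  assert (H3 : ler q (r (rres a p))) by (rewrite L2; auto).
  destruct (rres_spec _ q Hq H3) as [M1 M2].
  rewrite (rres_uniq a (rres (rres a p) q)) by (eapply ler_trans; eauto).
  rewrite M2. auto.
Qed.
Lemma lres_comp a b p : ob p -> lel p (d a) -> r a = d b ->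
  lres p (comp a b) = comp (lres p a) (lres (r (lres p a)) b).
Proof.
  intros Hp H1 Hab.
  destruct (lres_spec a p Hp H1) as [L1 L2].
  assert (H3 : lel (r (lres p a)) (d b)) by (rewrite <- Hab; apply lel_mono; auto).
  destruct (lres_spec b _ (ob_r _) H3) as [M1 M2].
  assert (Hle : lel (comp (lres p a) (lres (r (lres p a)) b)) (comp a b))
    by (apply lel_comp; auto).
  rewrite (lres_uniq _ _ Hle).
  destruct (comp_dr (lres p a) (lres (r (lres p a)) b)) as [N1 N2]; auto.
  rewrite N1, L2. auto.
Qed.
Lemma rres_comp a b s : ob s -> ler s (r b) -> r a = d b ->
  rres (comp a b) s = comp (rres a (d (rres b s))) (rres b s).
Proof.
  intros Hs H1 Hab.
  destruct (rres_spec b s Hs H1) as [L1 L2].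
  assert (H3 : ler (d (rres b s)) (r a)) by (rewrite Hab; apply ler_mono; auto).
  destruct (rres_spec a _ (ob_d _) H3) as [M1 M2].
  assert (Hle : ler (comp (rres a (d (rres b s))) (rres b s)) (comp a b))
    by (apply ler_comp; auto).
  rewrite (rres_uniq _ _ Hle).
  destruct (comp_dr (rres a (d (rres b s))) (rres b s)) as [N1 N2]; auto.
  rewrite N2, L2. auto.
Qed.
Lemma Theta_r a p : ob p -> le p (d a) -> r (lres p a) = Theta X a p.
Proof. intros Hp H. unfold Theta. rewrite <- H. auto. Qed.
Lemma Delta_d a s : ob s -> le s (r a) -> d (rres a s) = Delta X a s.
Proof. intros Hs H. unfold Delta. rewrite (le_D s (r a)) by (auto; apply ob_r). auto. Qed.

Lemma fchain2 p q : ob p -> ob q -> Frel X p q -> fchain X [p; q].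
Proof. intros. simpl. auto. Qed.
Lemma eps2_dr p q : ob p -> ob q -> Frel X p q -> d (eps [p; q]) = p /\ r (eps [p; q]) = q.
Proof. intros. apply (E3 p [q]). apply fchain2; auto. Qed.
Lemma eps_pp p : ob p -> eps [p; p] = p.
Proof. intros. pose proof (E2 [] p [] ) as E. simpl in E. rewrite E by auto. apply E1; auto. Qed.
Lemma eps_lres2 p p' q : ob p -> ob p' -> ob q -> Frel X p p' -> le q p ->
  lres q (eps [p; p']) = eps [q; th p' q].
Proof.
  intros Hp Hp' Hq F Hle.
  pose proof (E5 p [p'] q (fchain2 p p' Hp Hp' F) Hq (le_lel q p Hq Hp Hle)) as E.
  change (path_lres X q (p :: p' :: nil)) with (q :: th p' q :: nil) in E. rewrite (lres_uniq _ _ E).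
  destruct (eps2_dr q (th p' q)) as [G1 G2]; auto; try obs.
  apply (Frel_restr_l p p'); auto.
  rewrite G1. auto.
Qed.
Lemma eps_rres2 p p' s : ob p -> ob p' -> ob s -> Frel X p p' -> le s p' ->
  rres (eps [p; p']) s = eps [del p s; s].
Proof.
  intros Hp Hp' Hs F Hle.
  pose proof (E6 p [p'] s (fchain2 p p' Hp Hp' F) Hs (le_lel s p' Hs Hp' Hle)) as E.
  change (path_rres X (p :: p' :: nil) s) with (del p s :: s :: nil) in E. rewrite (rres_uniq _ _ E).
  destruct (eps2_dr (del p s) s) as [G1 G2]; auto; try obs.
  apply (Frel_restr_r p p'); auto.
  rewrite G2. auto.
Qed.


Lemma star_unfold a b : star X a b =
  comp (comp (rres a (del (r a) (d b))) (eps [del (r a) (d b); th (d b) (r a)]))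
       (lres (th (d b) (r a)) b).
Proof. reflexivity. Qed.

Lemma star_dr a b : d (star X a b) = d (rres a (del (r a) (d b))) /\
                    r (star X a b) = r (lres (th (d b) (r a)) b).
Proof.
  rewrite star_unfold.
  assert (Ha : ob (r a)) by apply ob_r. assert (Hb : ob (d b)) by apply ob_d.
  assert (F := Frel_DT (r a) (d b) Ha Hb).
  destruct (eps2_dr (del (r a) (d b)) (th (d b) (r a))) as [G1 G2]; try obs; auto.
  assert (R1 : r (rres a (del (r a) (d b))) = del (r a) (d b)).
  { apply rres_r; try obs. apply le_ler; try obs. apply D_le; auto. }
  assert (D1 : d (lres (th (d b) (r a)) b) = th (d b) (r a)).
  { apply lres_d; try obs. apply le_lel; try obs. apply T_le; auto. }
  destruct (comp_dr (rres a (del (r a) (d b))) (eps [del (r a) (d b); th (d b) (r a)])) as [K1 K2];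
    [congruence|].
  destruct (comp_dr (comp (rres a (del (r a) (d b))) (eps [del (r a) (d b); th (d b) (r a)]))
             (lres (th (d b) (r a)) b)) as [K3 K4]; [congruence|].
  split; congruence.
Qed.

Lemma comp_obj p : ob p -> comp p p = p.
Proof. intro H. pose proof (proj1 (comp_id p)) as E. unfold Defs.ob in H. rewrite H in E. auto. Qed.

Lemma star_obj p g : ob p -> ob g -> le g p -> star X p g = g /\ star X g p = g.
Proof.
  intros Hp Hg Hle. rewrite !star_unfold.
  rewrite (ob_r_eq p Hp), (ob_r_eq g Hg).
  assert (Ep : d p = p) by exact Hp. assert (Eg : d g = g) by exact Hg.
  rewrite Ep, Eg.
  rewrite (le_D g p), (le_Tp g p), (le_Dp g p), <- Hle by auto.
  rewrite eps_pp by auto.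
  rewrite (rres_obj p g), (lres_obj p g) by auto.
  rewrite (rres_obj g g), (lres_obj g g) by (auto; apply le_refl; auto).
  rewrite !comp_obj by auto. auto.
Qed.


Lemma star_assoc a b c : star X (star X a b) c = star X a (star X b c).
Proof.
  assert (Hra : ob (r a)) by apply ob_r. assert (Hdb : ob (d b)) by apply ob_d.
  assert (Hrb : ob (r b)) by apply ob_r. assert (Hdc : ob (d c)) by apply ob_d.
  pose proof (star_dr a b) as [_ Hrab].
  pose proof (star_dr b c) as [Hdbc _].
  rewrite (star_unfold (star X a b) c). rewrite Hrab.
  rewrite (star_unfold a b).
  rewrite (star_unfold a (star X b c)). rewrite Hdbc.
  rewrite (star_unfold b c).
  set (p1 := del (r a) (d b)) in *. set (q1 := th (d b) (r a)) in *.
  set (B1 := lres q1 b) in *. set (t := r B1) in *.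
  set (p2 := del t (d c)) in *. set (q2 := th (d c) t) in *.
  set (p3 := del (r b) (d c)) in *. set (q3 := th (d c) (r b)) in *.
  set (B3 := rres b p3) in *. set (w := d B3) in *.
  set (e := del (r a) w) in *. set (e2 := th w (r a)) in *.
  assert (Hp1 : ob p1) by obs. assert (Hq1 : ob q1) by obs.
  assert (F1 : Frel X p1 q1) by (apply Frel_DT; auto).
  assert (lp1 : le p1 (r a)) by (apply D_le; auto).
  assert (lq1 : le q1 (d b)) by (apply T_le; auto).
  assert (HdB1 : d B1 = q1) by (apply lres_d; auto; apply le_lel; auto).
  assert (Ht : ob t) by obs.
  assert (lt : le t (r b)) by (apply lres_r_le; auto; apply le_lel; auto).
  assert (Hp2 : ob p2) by obs. assert (Hq2 : ob q2) by obs.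
  assert (F2 : Frel X p2 q2) by (apply Frel_DT; auto).
  assert (lp2 : le p2 t) by (apply D_le; auto).
  assert (lq2 : le q2 (d c)) by (apply T_le; auto).
  assert (Hp3 : ob p3) by obs. assert (Hq3 : ob q3) by obs.
  assert (F3 : Frel X p3 q3) by (apply Frel_DT; auto).
  assert (lp3 : le p3 (r b)) by (apply D_le; auto).
  assert (lq3 : le q3 (d c)) by (apply T_le; auto).
  assert (Hw : ob w) by obs.
  assert (lw : le w (d b)) by (apply rres_d_le; auto; apply le_ler; auto).
  assert (HrB3 : r B3 = p3) by (apply rres_r; auto; apply le_ler; auto).
  assert (He : ob e) by obs. assert (He2 : ob e2) by obs.
  assert (le_ : le e (r a)) by (apply D_le; auto).
  assert (le2 : le e2 w) by (apply T_le; auto).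
  assert (Fe : Frel X e e2) by (apply Frel_DT; auto).
  assert (RA1 : r (rres a p1) = p1) by (apply rres_r; auto; apply le_ler; auto).
  destruct (eps2_dr p1 q1) as [DE1 RE1]; auto.
  destruct (comp_dr (rres a p1) (eps [p1; q1])) as [_ RC1]; [congruence|].
  rewrite (rres_comp (comp (rres a p1) (eps [p1; q1])) B1 p2); auto;
    [| apply le_ler; auto | congruence].
  assert (Hy : d (rres B1 p2) = del q1 w).
  { exact (C1b b q1 (d c) Hq1 (le_lel _ _ Hq1 Hdb lq1) Hdc). }
  assert (ly : le (d (rres B1 p2)) q1).
  { rewrite <- HdB1. apply rres_d_le; auto. apply le_ler; auto. }
  rewrite Hy in ly |- *.
  assert (Hy' : ob (del q1 w)) by obs.
  rewrite (rres_comp (rres a p1) (eps [p1; q1]) (del q1 w)); auto;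
    [| rewrite RE1; apply le_ler; auto | congruence].
  rewrite (eps_rres2 p1 q1 (del q1 w)); auto.
  assert (Fx : Frel X (del p1 (del q1 w)) (del q1 w)) by (apply (Frel_restr_r p1 q1); auto).
  destruct (eps2_dr (del p1 (del q1 w)) (del q1 w)) as [DEx REx]; auto; try obs.
  rewrite DEx.
  rewrite (rres_rres a p1 (del p1 (del q1 w))); auto; try obs;
    [| apply le_ler; auto | apply le_ler; try obs; apply D_le; auto].
  unfold p1, q1 in Fx, DEx, REx |- *.
  rewrite (I1 (r a) (d b) w) in Fx, DEx, REx |- *; auto.
  fold p1 q1 e in Fx, DEx, REx |- *.
  set (e1 := del q1 w) in *.
  assert (RA : r (rres a e) = e) by (apply rres_r; auto; apply le_ler; auto).
  assert (RM : r (rres B1 p2) = p2) by (apply rres_r; auto; apply le_ler; auto).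
  destruct (eps2_dr p2 q2) as [DE2 RE2]; auto.
  assert (DC2 : d (lres q2 c) = q2) by (apply lres_d; auto; apply le_lel; auto).
  destruct (comp_dr (eps [e; e1]) (rres B1 p2)) as [DC3 RC3]; [congruence|].
  destruct (comp_dr (comp (eps [e; e1]) (rres B1 p2)) (eps [p2; q2])) as [DC4 RC4]; [congruence|].
  rewrite (comp_assoc (rres a e) (eps [e; e1]) (rres B1 p2)) by congruence.
  rewrite (comp_assoc (rres a e) (comp (eps [e; e1]) (rres B1 p2)) (eps [p2; q2])) by congruence.
  rewrite (comp_assoc (rres a e) (comp (comp (eps [e; e1]) (rres B1 p2)) (eps [p2; q2])) (lres q2 c))
    by congruence.
  destruct (eps2_dr p3 q3) as [DE3 RE3]; auto.
  destruct (comp_dr B3 (eps [p3; q3])) as [DC5 RC5]; [congruence|].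
  assert (DC3' : d (lres q3 c) = q3) by (apply lres_d; auto; apply le_lel; auto).
  rewrite (lres_comp (comp B3 (eps [p3; q3])) (lres q3 c) e2); auto;
    [| rewrite DC5; apply le_lel; auto | congruence].
  rewrite (lres_comp B3 (eps [p3; q3]) e2); auto; [| apply le_lel; auto | congruence].
  assert (Hf2 : r (lres e2 B3) = th p3 t).
  { exact (C1a b p3 (r a) Hp3 (le_lel _ _ Hp3 Hrb lp3) Hra). }
  rewrite Hf2.
  assert (Hf2o : ob (th p3 t)) by obs.
  assert (lf2 : le (th p3 t) p3) by (apply T_le; auto).
  rewrite (eps_lres2 p3 q3 (th p3 t)); auto.
  assert (Ff : Frel X (th p3 t) (th q3 (th p3 t))) by (apply (Frel_restr_l p3 q3); auto).
  destruct (eps2_dr (th p3 t) (th q3 (th p3 t))) as [DEf REf]; auto; try obs.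
  destruct (comp_dr (lres e2 B3) (eps [th p3 t; th q3 (th p3 t)])) as [DC6 RC6]; [congruence|].
  rewrite RC6, REf.
  rewrite (lres_lres c q3 (th q3 (th p3 t))); auto; try obs;
    [| apply le_lel; auto | apply le_lel; try obs; apply T_le; auto].
  unfold q3, p3 in Ff, DEf, REf, RC6 |- *.
  rewrite (I2 (d c) (r b) t) in Ff, DEf, REf, RC6 |- *; auto.
  fold p3 q3 q2 in Ff, DEf, REf, RC6 |- *.
  destruct (eps2_dr e e2) as [DEe REe]; auto.
  assert (DL : d (lres e2 B3) = e2) by (apply lres_d; auto; apply le_lel; auto).
  destruct (eps2_dr (th p3 t) q2) as [DEf2 REf2]; auto.
  destruct (comp_dr (lres e2 B3) (eps [th p3 t; q2])) as [DC7 RC7]; [congruence|].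
  destruct (comp_dr (comp (lres e2 B3) (eps [th p3 t; q2])) (lres q2 c)) as [DC8 RC8]; [congruence|].
  rewrite (comp_assoc (rres a e) (eps [e; e2])) by congruence.
  f_equal.
  rewrite <- (comp_assoc (eps [e; e2]) (comp (lres e2 B3) (eps [th p3 t; q2])) (lres q2 c))
    by congruence.
  rewrite <- (comp_assoc (eps [e; e2]) (lres e2 B3) (eps [th p3 t; q2])) by congruence.
  pose proof (LR b (r a) (d c) Hra Hdc) as HL.
  change (comp (lambda_ X (r a) b (d c)) (lres q2 c) = comp (rho_ X (r a) b (d c)) (lres q2 c)).
  rewrite HL. reflexivity.
Qed.


Lemma star_Dl a : star X (d a) a = a.
Proof.
  rewrite star_unfold.
  destruct (cat_dr a) as [E1' [E2' _]].
  rewrite E2'.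
  assert (Ho : ob (d a)) by apply ob_d.
  rewrite A1d, A1t by auto.
  rewrite eps_pp by auto.
  rewrite (rres_obj (d a) (d a)) by (auto; apply le_refl; auto).
  rewrite lres_self. rewrite comp_obj by auto. apply comp_id.
Qed.

Lemma star_Rr a : star X a (r a) = a.
Proof.
  rewrite star_unfold.
  destruct (cat_dr a) as [_ [_ [E3' _]]].
  rewrite E3'.
  assert (Ho : ob (r a)) by apply ob_r.
  rewrite A1d, A1t by auto.
  rewrite eps_pp by auto.
  rewrite rres_self.
  rewrite (lres_obj (r a) (r a)) by (auto; apply le_refl; auto).
  rewrite (proj2 (comp_id a)). apply comp_id.
Qed.

End S.

Theorem theorem6p5 (C : Type) (X : cpc_data C) :
  is_chained_projection_category X ->
  is_DRC_semigroup (star X) (dom X) (cod X).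
Proof.
  intro HX. unfold is_DRC_semigroup.
  split; [|split; [|split; [|split]]].
  - intros. apply star_assoc; auto.
  - intros. split; [apply star_Dl | apply star_Rr]; auto.
  - intros a b. split.
    + rewrite (proj1 (star_dr C X HX a b)), (proj1 (star_dr C X HX a (dom X b))).
      rewrite (proj1 (cat_dr C X HX b)). reflexivity.
    + rewrite (proj2 (star_dr C X HX a b)), (proj2 (star_dr C X HX (cod X a) b)).
      rewrite (proj2 (proj2 (proj2 (cat_dr C X HX a)))). reflexivity.
  - intros a b. split.
    + assert (Hg : ob X (dom X (star X a b))) by (apply ob_d; auto).
      assert (Hp : ob X (dom X a)) by (apply ob_d; auto).
      assert (Hle : pa_le X (dom X (star X a b)) (dom X a)).
      { rewrite (proj1 (star_dr C X HX a b)). apply rres_d_le; auto; try (apply del_ob; auto; apply ob_r || apply ob_d; auto).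
        apply le_ler; auto; try (apply del_ob; auto; try apply ob_r; try apply ob_d; auto); try apply ob_r; auto.
        apply D_le; auto; try apply ob_r; try apply ob_d; auto. }
      destruct (star_obj C X HX _ _ Hp Hg Hle) as [S1 S2].
      rewrite S1, S2. reflexivity.
    + assert (Hg : ob X (cod X (star X a b))) by (apply ob_r; auto).
      assert (Hp : ob X (cod X b)) by (apply ob_r; auto).
      assert (Hle : pa_le X (cod X (star X a b)) (cod X b)).
      { rewrite (proj2 (star_dr C X HX a b)). apply lres_r_le; auto.
        apply th_ob; auto; try apply ob_d; try apply ob_r; auto.
        apply le_lel; auto; try (apply th_ob; auto; try apply ob_r; try apply ob_d; auto); try apply ob_d; auto.
        apply T_le; auto; try apply ob_r; try apply ob_d; auto. }
      destruct (star_obj C X HX _ _ Hp Hg Hle) as [S1 S2].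
      rewrite S1, S2. reflexivity.
  - intro a. destruct (cat_dr C X HX a) as [_ [E2' [E3' _]]]. auto.
Qed.
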